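(* Let $x\in(0,1)$ be irrational with OOCF expansion $((a_n,\varepsilon_n))_{n\ge1}$ and let $f(t)=\frac{1-t}{1+t}$. Define $\phi(k+1,-1)=(2k,-1)$ and $\phi(k,1)=(2k,1)$ for $k\ge1$. Then the EICF digits of $f(x)$ are $(b_n,\eta_n)=\phi(a_n,\varepsilon_n)$ for all $n\ge1$, and for all $n\ge1$ the $n$-th EICF convergent of $f(x)$ satisfies $p^E_n/q^E_n=f(p_n/q_n)$, where $p_n/q_n$ is the $n$-th OOCF principal convergent of $x$.
   Context: OOCF: digits $D=\{(1,1)\}\cup\{(a,\varepsilon):a\ge2,\ \varepsilon=\pm1\}$; $B(k+1,-1)=[\frac{k-1}{k},\frac{2k-1}{2k+1}]$, $B(k,1)=[\frac{2k-1}{2k+1},\frac{k}{k+1}]$ ($k\ge1$); $T(x)=\frac{kx-(k-1)}{k-(k+1)x}$ on $B(k+1,-1)$, $T(x)=\frac{k-(k+1)x}{kx-(k-1)}$ on $B(k,1)$, $T(1)=1$. The OOCF expansion of irrational $x\in(0,1)$ is the unique sequence $(a_n,\varepsilon_n)\in D$ with $T^{n-1}(x)\in B(a_n,\varepsilon_n)$ for all $n\ge1$; its $n$-th principal convergent is $p_n/q_n=1-\cfrac{1}{a_1+\cfrac{\varepsilon_1}{2-\cfrac{1}{\ddots\ \cfrac{\varepsilon_{n-1}}{2-\cfrac{1}{a_n+\varepsilon_n/2}}}}}$. EICF: $T_E:[0,1]\to[0,1]$, $T_E(y)=\frac1y-2k$ for $y\in[\frac1{2k+1},\frac1{2k}]$,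 $T_E(y)=2k-\frac1y$ for $y\in[\frac1{2k},\frac1{2k-1}]$ ($k\ge1$), $T_E(0)=0$. For irrational $y\in(0,1)$, its EICF digits are $(b_n,\eta_n)=(2k,1)$ if $T_E^{n-1}(y)\in[\frac1{2k+1},\frac1{2k}]$ and $(2k,-1)$ if $T_E^{n-1}(y)\in[\frac1{2k},\frac1{2k-1}]$; its $n$-th EICF convergent is $p^E_n/q^E_n=\cfrac{1}{b_1+\cfrac{\eta_1}{b_2+\cfrac{\eta_2}{\ddots+\cfrac{\eta_{n-1}}{b_n}}}}$. *)

(* Defs.v *)
From Stdlib Require Import Reals Lra Lia ZArith.
Open Scope R_scope.

Definition irrational (x : R) : Prop :=
  ~ exists (p q : Z), q <> 0%Z /\ x = IZR p / IZR q.

Definition inD (a : nat) (e : Z) : Prop :=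
  (a = 1%nat /\ e = 1%Z) \/ ((2 <= a)%nat /\ (e = 1%Z \/ e = (-1)%Z)).

(* cylinder B(a,eps):  B(k+1,-1) = [(k-1)/k, (2k-1)/(2k+1)],
                       B(k,1)    = [(2k-1)/(2k+1), k/(k+1)]   (k >= 1) *)
Definition inB (a : nat) (e : Z) (y : R) : Prop :=
  (e = (-1)%Z /\ (2 <= a)%nat /\
     let k := INR (a - 1) in (k - 1) / k <= y <= (2 * k - 1) / (2 * k + 1))
  \/
  (e = 1%Z /\ (1 <= a)%nat /\
     let k := INR a in (2 * k - 1) / (2 * k + 1) <= y <= k / (k + 1)).

(* For y in [0,1), the unique k >= 1 with
   y in [(k-1)/k, k/(k+1)) = B(k+1,-1) U B(k,1) is k = floor(1/(1-y));
   then the branch is chosen according to y <= (2k-1)/(2k+1).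
   (At common endpoints the two branches agree, so this is T.)  T(1) = 1. *)
Definition T (y : R) : R :=
  if Req_EM_T y 1 then 1 else
  let k := IZR (Int_part (1 / (1 - y))) in
  if Rle_dec y ((2 * k - 1) / (2 * k + 1))
  then (k * y - (k - 1)) / (k - (k + 1) * y)
  else (k - (k + 1) * y) / (k * y - (k - 1)).

Definition is_OOCF_expansion (x : R) (a : nat -> nat) (e : nat -> Z) : Prop :=
  forall n : nat, (1 <= n)%nat ->
    inD (a n) (e n) /\ inB (a n) (e n) (Nat.iter (n - 1) T x).

Fixpoint oocf_tail (a : nat -> nat) (e : nat -> Z) (i m : nat) : R :=
  match m with
  | O => INR (a i) + IZR (e i) / 2
  | S m' => INR (a i) + IZR (e i) / (2 - 1 / oocf_tail a e (S i) m')
  end.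

Definition oocf_conv (a : nat -> nat) (e : nat -> Z) (n : nat) : R :=
  1 - 1 / oocf_tail a e 1 (n - 1).

(* The EICF map T_E on [0,1]:  with m = floor(1/y),
   if m = 2k (y in (1/(2k+1), 1/(2k)]) then T_E(y) = 1/y - 2k,
   if m = 2k-1 (y in (1/(2k), 1/(2k-1)]) then T_E(y) = 2k - 1/y;
   branches agree at common endpoints.  T_E(0) = 0. *)
Definition TE (y : R) : R :=
  if Req_EM_T y 0 then 0 else
  let m := Int_part (1 / y) in
  if Z.even m then 1 / y - IZR m else IZR (m + 1) - 1 / y.

Definition eicf_cyl (b : nat) (eta : Z) (y : R) : Prop :=
  exists k : nat, (1 <= k)%nat /\ b = (2 * k)%nat /\
    ((eta = 1%Z /\ 1 / (2 * INR k + 1) <= y <= 1 / (2 * INR k)) \/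
     (eta = (-1)%Z /\ 1 / (2 * INR k) <= y <= 1 / (2 * INR k - 1))).

Definition is_EICF_expansion (y : R) (b : nat -> nat) (eta : nat -> Z) : Prop :=
  forall n : nat, (1 <= n)%nat -> eicf_cyl (b n) (eta n) (Nat.iter (n - 1) TE y).

Fixpoint eicf_tail (b : nat -> nat) (eta : nat -> Z) (i m : nat) : R :=
  match m with
  | O => INR (b i)
  | S m' => INR (b i) + IZR (eta i) / eicf_tail b eta (S i) m'
  end.

Definition eicf_conv (b : nat -> nat) (eta : nat -> Z) (n : nat) : R :=
  1 / eicf_tail b eta 1 (n - 1).

Definition fM (t : R) : R := (1 - t) / (1 + t).

Definition phi_b (a : nat) (e : Z) : nat :=
  if Z.eqb e (-1) then (2 * (a - 1))%nat else (2 * a)%nat.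
Definition phi_eta (a : nat) (e : Z) : Z := e.

(* Main.v *)
Require Import Defs.
From Stdlib Require Import Reals Lra Lia ZArith Psatz.
Open Scope R_scope.

Definition ratl (r : R) : Prop := exists p q : Z, q <> 0%Z /\ r = IZR p / IZR q.

Lemma ratl_IZR z : ratl (IZR z).
Proof. exists z, 1%Z. split; [lia|]. simpl. field. Qed.

Lemma ratl_INR n : ratl (INR n).
Proof. rewrite INR_IZR_INZ. apply ratl_IZR. Qed.

Lemma ratl_plus x y : ratl x -> ratl y -> ratl (x + y).
Proof.
  intros [p1 [q1 [H1 ->]]] [p2 [q2 [H2 ->]]].
  exists (p1*q2+p2*q1)%Z, (q1*q2)%Z. split; [lia|].
  rewrite plus_IZR, !mult_IZR. field. split; apply not_0_IZR; assumption.
Qed.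

Lemma ratl_mult x y : ratl x -> ratl y -> ratl (x * y).
Proof.
  intros [p1 [q1 [H1 ->]]] [p2 [q2 [H2 ->]]].
  exists (p1*p2)%Z, (q1*q2)%Z. split; [lia|].
  rewrite !mult_IZR. field. split; apply not_0_IZR; assumption.
Qed.

Lemma ratl_opp x : ratl x -> ratl (- x).
Proof.
  intros [p1 [q1 [H1 ->]]]. exists (-p1)%Z, q1. split; [lia|].
  rewrite opp_IZR. field. apply not_0_IZR; assumption.
Qed.

Lemma ratl_inv x : ratl x -> ratl (/ x).
Proof.
  intros [p1 [q1 [H1 ->]]]. destruct (Z.eq_dec p1 0) as [->|Hp].
  - replace (IZR 0 / IZR q1) with 0 by (simpl; field; apply not_0_IZR; assumption).
    rewrite Rinv_0. apply (ratl_IZR 0).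
  - exists q1, p1. split; [lia|]. field. split; apply not_0_IZR; assumption.
Qed.

Lemma ratl_minus x y : ratl x -> ratl y -> ratl (x - y).
Proof. intros. unfold Rminus. apply ratl_plus; [|apply ratl_opp]; assumption. Qed.

Lemma ratl_div x y : ratl x -> ratl y -> ratl (x / y).
Proof. intros. unfold Rdiv. apply ratl_mult; [|apply ratl_inv]; assumption. Qed.

Ltac solve_rat := repeat (apply ratl_IZR || apply ratl_INR || apply ratl_div || apply ratl_minus || apply ratl_plus
  || apply ratl_mult || apply ratl_opp || apply ratl_INR || apply ratl_IZR).

Lemma irr_neq r z : ratl r -> irrational z -> r <> z.
Proof. intros [p [q [Hq ->]]] Hi Heq. apply Hi. exists p, q. auto. Qed.

Lemma le_irr r z : ratl r -> irrational z -> r <= z -> r < z.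
Proof. intros Hr Hz H. destruct H; auto. exfalso; exact (irr_neq r z Hr Hz H). Qed.

Lemma ge_irr r z : ratl r -> irrational z -> z <= r -> z < r.
Proof. intros Hr Hz H. destruct H; auto. exfalso; exact (irr_neq r z Hr Hz (eq_sym H)). Qed.

Lemma fM_rat y : ratl y -> ratl (fM y).
Proof. intros. unfold fM. solve_rat; assumption. Qed.

Lemma fM_inv y : y <> -1 -> fM (fM y) = y.
Proof. intros. unfold fM. field. split; [lra|]. intro H1. apply H. lra. Qed.

Lemma irrational_fM x : irrational x -> irrational (fM x).
Proof.
  intros Hx Hr. apply Hx.
  assert (x <> -1). { intro H1. refine (irr_neq (-1) x _ Hx (eq_sym H1)). solve_rat. }
  rewrite <- (fM_inv x) by assumption. apply fM_rat. exact Hr.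
Qed.

Lemma irr_of_fM y : irrational (fM y) -> irrational y.
Proof. intros H Hr. apply H, fM_rat, Hr. Qed.

Lemma TE_irr z : irrational z -> irrational (TE z).
Proof.
  intros Hz. unfold TE. destruct (Req_EM_T z 0) as [H0|H0].
  { exfalso. refine (irr_neq 0 z _ Hz (eq_sym H0)). solve_rat. }
  cbv zeta. destruct (Z.even (Int_part (1 / z))); intros Hr; apply Hz.
  - set (m := IZR (Int_part (1 / z))) in *.
    replace z with (1 / ((1 / z - m) + m)) by (field; split; [auto|lra]).
    apply ratl_div; [solve_rat|]. apply ratl_plus; [exact Hr|solve_rat].
  - set (m := IZR (Int_part (1 / z) + 1)) in *.
    replace z with (1 / (m - (m - 1 / z))) by (field; split; [auto|lra]).
    apply ratl_div; [solve_rat|]. apply ratl_minus; [solve_rat|exact Hr].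
Qed.

Lemma Int_part_eq r n : IZR n <= r -> r < IZR n + 1 -> Int_part r = n.
Proof.
  intros. unfold Int_part.
  assert (up r = (n+1)%Z). { symmetry; apply tech_up; rewrite plus_IZR; simpl; lra. }
  lia.
Qed.

Lemma le_div_r c A B : 0 < B -> c * B <= A -> c <= A / B.
Proof. intros. apply (Rmult_le_reg_r B); [lra|]. unfold Rdiv.
  rewrite Rmult_assoc, Rinv_l; lra. Qed.
Lemma lt_div_r c A B : 0 < B -> c * B < A -> c < A / B.
Proof. intros. apply (Rmult_lt_reg_r B); [lra|]. unfold Rdiv.
  rewrite Rmult_assoc, Rinv_l; lra. Qed.
Lemma div_le_r c A B : 0 < B -> A <= c * B -> A / B <= c.
Proof. intros. apply (Rmult_le_reg_r B); [lra|]. unfold Rdiv.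
  rewrite Rmult_assoc, Rinv_l; lra. Qed.
Lemma div_lt_r c A B : 0 < B -> A < c * B -> A / B < c.
Proof. intros. apply (Rmult_lt_reg_r B); [lra|]. unfold Rdiv.
  rewrite Rmult_assoc, Rinv_l; lra. Qed.
Lemma le_div_inv c A B : 0 < B -> c <= A / B -> c * B <= A.
Proof. intros. replace A with (A / B * B) by (field; lra).
  apply Rmult_le_compat_r; lra. Qed.
Lemma lt_div_inv c A B : 0 < B -> c < A / B -> c * B < A.
Proof. intros. replace A with (A / B * B) by (field; lra).
  apply Rmult_lt_compat_r; lra. Qed.
Lemma div_le_inv c A B : 0 < B -> A / B <= c -> A <= c * B.
Proof. intros. replace A with (A / B * B) by (field; lra).
  apply Rmult_le_compat_r; lra. Qed.
Lemma div_lt_inv c A B : 0 < B -> A / B < c -> A < c * B.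
Proof. intros. replace A with (A / B * B) by (field; lra).
  apply Rmult_lt_compat_r; lra. Qed.
Lemma div_le_div a b c d : 0 < b -> 0 < d -> a * d <= c * b -> a / b <= c / d.
Proof. intros. apply div_le_r; [lra|]. replace (c / d * b) with ((c * b) / d) by (field; lra).
  apply le_div_r; lra. Qed.

Lemma even_odd z : Z.even (2 * z - 1) = false.
Proof. replace (2*z-1)%Z with (1 + 2*(z-1))%Z by ring. rewrite Z.even_add_mul_2. reflexivity. Qed.
Lemma even_even z : Z.even (2 * z) = true.
Proof. replace (2*z)%Z with (0 + 2*z)%Z by ring. rewrite Z.even_add_mul_2. reflexivity. Qed.

Lemma INR_ge1 k : (1 <= k)%nat -> 1 <= INR k.
Proof. intros. apply (le_INR 1 k) in H. simpl in H. exact H. Qed.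

Lemma core_minus (k : nat) y : (1 <= k)%nat ->
  (INR k - 1) / INR k <= y <= (2 * INR k - 1) / (2 * INR k + 1) -> irrational y ->
  TE (fM y) = fM (T y) /\ eicf_cyl (2 * k) (-1) (fM y).
Proof.
  intros Hk [Hy1 Hy2] Hirr.
  assert (HK1 := INR_ge1 k Hk).
  assert (Hy2s : y < (2 * INR k - 1) / (2 * INR k + 1)) by (apply ge_irr; [solve_rat|assumption|assumption]).
  remember (INR k) as K eqn:HK.
  apply div_le_inv in Hy1; [|lra].
  apply lt_div_inv in Hy2s; [|lra].
  assert (y0 : 0 <= y) by nra.
  assert (y1 : y < 1) by nra.
  assert (y3 : y * (K + 1) < K) by nra.
  split.
  - unfold T. destruct (Req_EM_T y 1) as [E|_]; [lra|]. cbv zeta.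
    rewrite (Int_part_eq (1 / (1 - y)) (Z.of_nat k)).
    2: { rewrite <- INR_IZR_INZ, <- HK. apply le_div_r; lra. }
    2: { rewrite <- INR_IZR_INZ, <- HK. apply div_lt_r; lra. }
    rewrite <- INR_IZR_INZ, <- HK.
    destruct (Rle_dec y ((2 * K - 1) / (2 * K + 1))) as [_|Hn].
    2: { exfalso. apply Hn. apply Rlt_le, lt_div_r; lra. }
    assert (Hf : 0 < fM y) by (unfold fM; apply Rdiv_lt_0_compat; lra).
    unfold TE. destruct (Req_EM_T (fM y) 0) as [E|_]; [lra|]. cbv zeta.
    assert (E : 1 / fM y = (1 + y) / (1 - y)) by (unfold fM; field; split; lra).
    rewrite E.
    assert (Hm : IZR (2 * Z.of_nat k - 1) = 2 * K - 1)
      by (rewrite minus_IZR, mult_IZR, <- INR_IZR_INZ, <- HK; reflexivity).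
    rewrite (Int_part_eq _ (2 * Z.of_nat k - 1)).
    2: { rewrite Hm. apply le_div_r; lra. }
    2: { rewrite Hm. apply div_lt_r; lra. }
    rewrite even_odd.
    replace (2 * Z.of_nat k - 1 + 1)%Z with (2 * Z.of_nat k)%Z by ring.
    rewrite mult_IZR, <- INR_IZR_INZ, <- HK.
    unfold fM. field. repeat split; nra.
  - exists k. split; [exact Hk|]. split; [reflexivity|]. right. split; [reflexivity|].
    rewrite <- HK. unfold fM. split; apply div_le_div; nra.
Qed.

Lemma core_plus (k : nat) y : (1 <= k)%nat ->
  (2 * INR k - 1) / (2 * INR k + 1) <= y <= INR k / (INR k + 1) -> irrational y ->
  TE (fM y) = fM (T y) /\ eicf_cyl (2 * k) 1 (fM y).
Proof.
  intros Hk [Hy1 Hy2] Hirr.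
  assert (HK1 := INR_ge1 k Hk).
  assert (Hy1s : (2 * INR k - 1) / (2 * INR k + 1) < y) by (apply le_irr; [solve_rat|assumption|assumption]).
  assert (Hy2s : y < INR k / (INR k + 1)) by (apply ge_irr; [solve_rat|assumption|assumption]).
  remember (INR k) as K eqn:HK.
  apply div_le_inv in Hy1; [|lra].
  apply le_div_inv in Hy2; [|lra].
  apply div_lt_inv in Hy1s; [|lra].
  apply lt_div_inv in Hy2s; [|lra].
  assert (y0 : 0 < y) by nra.
  assert (y1 : y < 1) by nra.
  assert (y3 : K - 1 < y * K) by nra.
  split.
  - unfold T. destruct (Req_EM_T y 1) as [E|_]; [lra|]. cbv zeta.
    rewrite (Int_part_eq (1 / (1 - y)) (Z.of_nat k)).
    2: { rewrite <- INR_IZR_INZ, <- HK. apply le_div_r; lra. }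
    2: { rewrite <- INR_IZR_INZ, <- HK. apply div_lt_r; lra. }
    rewrite <- INR_IZR_INZ, <- HK.
    destruct (Rle_dec y ((2 * K - 1) / (2 * K + 1))) as [Hn|_].
    { exfalso. apply le_div_inv in Hn; lra. }
    assert (Hf : 0 < fM y) by (unfold fM; apply Rdiv_lt_0_compat; lra).
    unfold TE. destruct (Req_EM_T (fM y) 0) as [E|_]; [lra|]. cbv zeta.
    assert (E : 1 / fM y = (1 + y) / (1 - y)) by (unfold fM; field; split; lra).
    rewrite E.
    assert (Hm : IZR (2 * Z.of_nat k) = 2 * K)
      by (rewrite mult_IZR, <- INR_IZR_INZ, <- HK; reflexivity).
    rewrite (Int_part_eq _ (2 * Z.of_nat k)).
    2: { rewrite Hm. apply le_div_r; lra. }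
    2: { rewrite Hm. apply div_lt_r; lra. }
    rewrite even_even, Hm.
    unfold fM. field. repeat split; nra.
  - exists k. split; [exact Hk|]. split; [reflexivity|]. left. split; [reflexivity|].
    rewrite <- HK. unfold fM. split; apply div_le_div; nra.
Qed.

Lemma conj_step a e y : inB a e y -> irrational y ->
  TE (fM y) = fM (T y) /\ eicf_cyl (phi_b a e) (phi_eta a e) (fM y).
Proof.
  intros [[He [Ha Hy]] | [He [Ha Hy]]] Hirr; cbv zeta in Hy; subst e.
  - unfold phi_b, phi_eta. rewrite Z.eqb_refl.
    apply core_minus; [lia|exact Hy|exact Hirr].
  - unfold phi_b, phi_eta. change (Z.eqb 1 (-1)) with false. cbv iota.
    apply core_plus; [lia|exact Hy|exact Hirr].
Qed.

Lemma cyl_strict b eta z : irrational z -> eicf_cyl b eta z ->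
  exists k, (1 <= k)%nat /\ b = (2 * k)%nat /\
   ((eta = 1%Z /\ 1 < z * (2 * INR k + 1) /\ z * (2 * INR k) < 1) \/
    (eta = (-1)%Z /\ 1 < z * (2 * INR k) /\ z * (2 * INR k - 1) < 1)).
Proof.
  intros Hz [k [Hk [Hb H]]]. assert (HK1 := INR_ge1 k Hk).
  exists k. split; [exact Hk|]. split; [exact Hb|].
  destruct H as [[He [H1 H2]] | [He [H1 H2]]].
  - left. split; [exact He|].
    apply le_irr in H1; [|solve_rat|exact Hz]. apply ge_irr in H2; [|solve_rat|exact Hz].
    split; [apply div_lt_inv in H1|apply lt_div_inv in H2]; lra.
  - right. split; [exact He|].
    apply le_irr in H1; [|solve_rat|exact Hz]. apply ge_irr in H2; [|solve_rat|exact Hz].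
    split; [apply div_lt_inv in H1|apply lt_div_inv in H2]; lra.
Qed.

Lemma cyl_unique b eta b' eta' z : irrational z -> eicf_cyl b eta z -> eicf_cyl b' eta' z ->
  b = b' /\ eta = eta'.
Proof.
  intros Hz H H'.
  destruct (cyl_strict _ _ _ Hz H) as [k [Hk [Hb Hc]]].
  destruct (cyl_strict _ _ _ Hz H') as [k' [Hk' [Hb' Hc']]].
  assert (HK := INR_ge1 k Hk). assert (HK' := INR_ge1 k' Hk').
  assert (A1 : 1 < z * (2 * INR k + 1) /\ z * (2 * INR k - 1) < 1 /\ 0 < z) by
    (destruct Hc as [[_ [? ?]]|[_ [? ?]]]; nra).
  assert (A2 : 1 < z * (2 * INR k' + 1) /\ z * (2 * INR k' - 1) < 1) by
    (destruct Hc' as [[_ [? ?]]|[_ [? ?]]]; nra).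
  assert (k = k').
  { destruct (lt_eq_lt_dec k k') as [[Hlt|Heq]|Hgt]; auto; exfalso.
    - assert (INR k + 1 <= INR k') by (rewrite <- S_INR; apply le_INR; lia). nra.
    - assert (INR k' + 1 <= INR k) by (rewrite <- S_INR; apply le_INR; lia). nra. }
  subst k'. split; [lia|].
  destruct Hc as [[-> [? ?]]|[-> [? ?]]]; destruct Hc' as [[-> [? ?]]|[-> [? ?]]];
    auto; lra.
Qed.

Lemma phi_b_INR a e : inD a e -> INR (phi_b a e) = 2 * INR a + IZR e - 1.
Proof.
  intros [[-> ->]|[Ha [-> | ->]]]; unfold phi_b.
  - simpl. lra.
  - change (Z.eqb 1 (-1)) with false. cbv iota. rewrite mult_INR. simpl. lra.
  - rewrite Z.eqb_refl, mult_INR, minus_INR by lia. simpl. lra.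
Qed.

Lemma tail_rel a e : (forall j, (1 <= j)%nat -> inD (a j) (e j)) ->
  forall m i, (1 <= i)%nat ->
  1 <= oocf_tail a e i m /\
  eicf_tail (fun k => phi_b (a k) (e k)) (fun k => phi_eta (a k) (e k)) i m
    = 2 * oocf_tail a e i m - 1.
Proof.
  intros HD m. induction m as [|m IH]; intros i Hi.
  - simpl. rewrite phi_b_INR by (apply HD; lia).
    split; [|lra].
    destruct (HD i Hi) as [[-> ->]|[Ha [-> | ->]]].
    + simpl. lra.
    + apply le_INR in Ha. simpl in Ha. lra.
    + apply le_INR in Ha. simpl in Ha. lra.
  - destruct (IH (S i) ltac:(lia)) as [Ht Heq].
    cbn [oocf_tail eicf_tail]. rewrite Heq. unfold phi_eta.
    set (t := oocf_tail a e (S i) m) in *.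
    assert (H1 : 1 / t <= 1) by (apply div_le_r; lra).
    assert (H2 : 0 < 1 / t) by (apply Rdiv_lt_0_compat; lra).
    assert (H3 : 1 / (2 - 1 / t) <= 1) by (apply div_le_r; lra).
    assert (H4 : 0 < 1 / (2 - 1 / t)) by (apply Rdiv_lt_0_compat; lra).
    split.
    + destruct (HD i Hi) as [[-> ->]|[Ha [-> | ->]]].
      * simpl. unfold Rdiv in *. lra.
      * apply le_INR in Ha. simpl in Ha. unfold Rdiv in *. lra.
      * apply le_INR in Ha. simpl in Ha. unfold Rdiv in *. lra.
    + rewrite phi_b_INR by (apply HD; lia). field. split; lra.
Qed.

Theorem mainTheorem13 (x : R) (a : nat -> nat) (e : nat -> Z) :
  0 < x < 1 -> irrational x ->
  is_OOCF_expansion x a e ->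
  (* the EICF digits of f(x) are phi(a_n, e_n) *)
  is_EICF_expansion (fM x) (fun n => phi_b (a n) (e n)) (fun n => phi_eta (a n) (e n)) /\
  (forall (b : nat -> nat) (eta : nat -> Z), is_EICF_expansion (fM x) b eta ->
     forall n : nat, (1 <= n)%nat -> b n = phi_b (a n) (e n) /\ eta n = phi_eta (a n) (e n)) /\
  (* convergents *)
  (forall n : nat, (1 <= n)%nat ->
     eicf_conv (fun k => phi_b (a k) (e k)) (fun k => phi_eta (a k) (e k)) n
     = fM (oocf_conv a e n)).
Proof.
  intros Hx Hirr H.
  assert (Hn : forall n, inD (a (S n)) (e (S n)) /\ inB (a (S n)) (e (S n)) (Nat.iter n T x)).
  { intro n. destruct (H (S n) ltac:(lia)) as [H1 H2].
    replace (S n - 1)%nat with n in H2 by lia. split; assumption. }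
  assert (Hrel : forall n, Nat.iter n TE (fM x) = fM (Nat.iter n T x) /\
                           irrational (Nat.iter n TE (fM x))).
  { induction n as [|n [IH1 IH2]].
    - simpl. split; [reflexivity|]. apply irrational_fM, Hirr.
    - change (Nat.iter (S n) TE (fM x)) with (TE (Nat.iter n TE (fM x))).
      change (Nat.iter (S n) T x) with (T (Nat.iter n T x)).
      split; [|apply TE_irr, IH2].
      rewrite IH1. apply (proj1 (conj_step (a (S n)) (e (S n)) _ (proj2 (Hn n)) ltac:(apply irr_of_fM; rewrite <- IH1; exact IH2))). }
  assert (P1 : is_EICF_expansion (fM x) (fun n => phi_b (a n) (e n)) (fun n => phi_eta (a n) (e n))).
  { intros n Hn1. destruct n as [|m]; [lia|].
    replace (S m - 1)%nat with m by lia.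
    destruct (Hrel m) as [E Hi]. rewrite E.
    apply (proj2 (conj_step (a (S m)) (e (S m)) _ (proj2 (Hn m)) ltac:(apply irr_of_fM; rewrite <- E; exact Hi))). }
  split; [exact P1|]. split.
  - intros b eta Hb n Hn1.
    destruct (cyl_unique _ _ _ _ (Nat.iter (n - 1) TE (fM x)) (proj2 (Hrel _)) (Hb n Hn1) (P1 n Hn1))
      as [E1 E2]. auto.
  - intros n Hn1. unfold eicf_conv, oocf_conv.
    assert (HD : forall j, (1 <= j)%nat -> inD (a j) (e j)) by (intros j Hj; apply (proj1 (H j Hj))).
    destruct (tail_rel a e HD (n - 1) 1 ltac:(lia)) as [Ht Heq].
    rewrite Heq. set (t := oocf_tail a e 1 (n - 1)) in *.
    unfold fM. field. repeat split; try lra.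
Qed.
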